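(* Let $0<\eta\le\gamma$ and let $c$ satisfy \[ 0\le c\le\frac{\sqrt{2|2\eta-\gamma|+\gamma^2+1}-|2\eta-\gamma|-1}{4\eta^2}. \] Then for all $x\in[-1,1]$ and $\epsilon\in[-1,1]$, \[ e^{c\eta^2x^2-\eta x}-\frac{e^{-\gamma(x+\epsilon)}-1}{\gamma}\,\eta\,(1+2c\eta\epsilon)\,e^{c\eta^2\epsilon^2+\eta\epsilon}\;\le\;e^{c\eta^2\epsilon^2+\eta\epsilon}. \] *)

(* Defs.v *)
From Stdlib Require Import Reals Lra.

(* Main.v *)
Require Import Defs.
From Stdlib Require Import Reals Lra.
From Coquelicot Require Import Coquelicot.
Open Scope R_scope.

Lemma key_q (eta gamma c : R) :
  0 < eta -> eta <= gamma -> 0 <= c ->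
  c <= (sqrt (2 * Rabs (2 * eta - gamma) + gamma ^ 2 + 1) - Rabs (2 * eta - gamma) - 1)
       / (4 * eta ^ 2) ->
  forall e, -1 <= e <= 1 ->
  eta * (1 + 2*c*eta*e)^2 - gamma * (1 + 2*c*eta*e) + 2*c*eta <= 0.
Proof.
  intros Heta Hg Hc Hb e He.
  set (a := Rabs (2 * eta - gamma)).
  set (S := 2 * a + gamma ^ 2 + 1).
  assert (Ha : 0 <= a) by apply Rabs_pos.
  assert (Hpos : 0 < 4 * eta ^ 2) by nra.
  assert (H1 : 4 * eta^2 * c + a + 1 <= sqrt S).
  { fold a S in Hb. apply Rmult_le_compat_l with (r := 4*eta^2) in Hb; [|lra].
    replace (4 * eta ^ 2 * ((sqrt S - a - 1) / (4 * eta ^ 2))) with (sqrt S - a - 1) in Hb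
      by (field; lra). lra. }
  assert (HS : 0 <= S) by (unfold S; nra).
  assert (H2 : (4 * eta^2 * c + a + 1) * (4 * eta^2 * c + a + 1) <= S).
  { rewrite <- (sqrt_sqrt S HS). apply Rmult_le_compat; nra. }
  set (w := 2*c*eta).
  assert (Hw : 0 <= w) by (unfold w; nra).
  assert (Hk : gamma - eta >= w * (1 + a) + eta * w^2).
  { unfold S in H2. 
    assert (Ha2 : a * a = (2*eta - gamma)*(2*eta-gamma)).
    { unfold a. destruct (Rle_dec 0 (2*eta-gamma)).
      rewrite Rabs_right; lra. rewrite Rabs_left; lra. }
    assert (H3 : 4*eta*(eta*w^2 + w*(1+a) + eta - gamma) <= 0).
    { unfold w. nra. }
    nra. }
  assert (Hae : (2*eta-gamma)*e <= a).
  { unfold a. destruct (Rle_dec 0 (2*eta-gamma)).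
    rewrite Rabs_right; nra. rewrite Rabs_left; nra. }
  fold w.
  assert (E2 : e^2 <= 1) by nra.
  assert (eta * w^2 * e^2 <= eta * w^2) by (assert (0 <= eta*w^2) by nra; nra).
  assert (w * ((2*eta-gamma)*e) <= w * a) by (apply Rmult_le_compat_l; lra).
  nra.
Qed.

Theorem mainTheorem11 (eta gamma c : R) :
  0 < eta -> eta <= gamma ->
  0 <= c ->
  c <= (sqrt (2 * Rabs (2 * eta - gamma) + gamma ^ 2 + 1) - Rabs (2 * eta - gamma) - 1)
       / (4 * eta ^ 2) ->
  forall x eps : R,
    -1 <= x <= 1 -> -1 <= eps <= 1 ->
    exp (c * eta ^ 2 * x ^ 2 - eta * x)
    - (exp (- gamma * (x + eps)) - 1) / gamma * eta * (1 + 2 * c * eta * eps)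
      * exp (c * eta ^ 2 * eps ^ 2 + eta * eps)
    <= exp (c * eta ^ 2 * eps ^ 2 + eta * eps).
Proof.
  intros Heta Hg Hc Hb x eps Hx He.
  assert (Hgam : 0 < gamma) by lra.
  set (N := fun e => exp (c * eta ^ 2 * e ^ 2 + eta * e)
     + (exp (- gamma * (x + e)) - 1) / gamma * eta * (1 + 2 * c * eta * e)
       * exp (c * eta ^ 2 * e ^ 2 + eta * e) - exp (c * eta ^ 2 * x ^ 2 - eta * x)).
  set (N' := fun e => exp (c * eta ^ 2 * e ^ 2 + eta * e) * (exp (- gamma * (x + e)) - 1)
     * (eta / gamma) * (eta * (1 + 2*c*eta*e)^2 - gamma * (1 + 2*c*eta*e) + 2*c*eta)).
  assert (HD : forall e, derivable_pt_lim N e (N' e)).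
  { intro e. apply is_derive_Reals. unfold N, N'. auto_derive; [easy|]. replace (c * (eta * (eta * 1)) * (e * (e * 1)) + eta * e) with (c * eta ^ 2 * e ^ 2 + eta * e) by ring. field. lra. }
  assert (N0 : N (-x) = 0).
  { unfold N. replace (x + - x) with 0 by ring. rewrite Rmult_0_r, exp_0.
    replace (c * eta ^ 2 * (- x) ^ 2 + eta * - x) with (c * eta ^ 2 * x ^ 2 - eta * x) by ring.
    field. lra. }
  assert (Hq := key_q eta gamma c Heta Hg Hc Hb).
  assert (HN : 0 <= N eps).
  { destruct (Rtotal_order eps (-x)) as [Hlt|[Heq|Hgt]].
    - destruct (MVT_cor2 N N' eps (-x) Hlt (fun c _ => HD c)) as [z [Hz Hzi]].
      assert (Hq' : eta * (1 + 2*c*eta*z)^2 - gamma * (1 + 2*c*eta*z) + 2*c*eta <= 0)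
        by (apply Hq; lra).
      assert (Hex : 1 < exp (- gamma * (x + z))).
      { rewrite <- exp_0. apply exp_increasing. nra. }
      assert (Hpz : 0 < exp (c * eta ^ 2 * z ^ 2 + eta * z)) by apply exp_pos.
      assert (0 < eta / gamma) by (apply Rdiv_lt_0_compat; lra).
      assert (N' z <= 0).
      { unfold N'. apply Rmult_le_0_l; [|lra].
        apply Rmult_le_pos; [|lra]. apply Rmult_le_pos; lra. }
      nra.
    - subst eps. lra.
    - destruct (MVT_cor2 N N' (-x) eps Hgt (fun c _ => HD c)) as [z [Hz Hzi]].
      assert (Hq' : eta * (1 + 2*c*eta*z)^2 - gamma * (1 + 2*c*eta*z) + 2*c*eta <= 0)
        by (apply Hq; lra).
      assert (Hex : exp (- gamma * (x + z)) < 1).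
      { rewrite <- exp_0. apply exp_increasing. nra. }
      assert (Hpz : 0 < exp (c * eta ^ 2 * z ^ 2 + eta * z)) by apply exp_pos.
      assert (0 < eta / gamma) by (apply Rdiv_lt_0_compat; lra).
      assert (0 <= N' z).
      { unfold N'.
        replace (exp (c * eta ^ 2 * z ^ 2 + eta * z) * (exp (- gamma * (x + z)) - 1) *
          (eta / gamma) * (eta * (1 + 2 * c * eta * z) ^ 2 - gamma * (1 + 2 * c * eta * z) + 2 * c * eta))
        with (exp (c * eta ^ 2 * z ^ 2 + eta * z) * (1 - exp (- gamma * (x + z))) *
          (eta / gamma) * (-(eta * (1 + 2 * c * eta * z) ^ 2 - gamma * (1 + 2 * c * eta * z) + 2 * c * eta)))
        by ring.
        apply Rmult_le_pos; [|lra].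
        apply Rmult_le_pos; [|lra]. apply Rmult_le_pos; lra. }
      nra. }
  unfold N in HN. lra.
Qed.
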